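(* Let $\mathfrak s$ be a finite-dimensional real solvable Lie algebra such that $[\mathfrak s,\mathfrak s]$ has codimension $1$ in $\mathfrak s$. If $\mathfrak s$ admits an abelian complex structure, then $\mathfrak s$ is isomorphic to $\mathfrak{aff}(\mathbb R)$, the $2$-dimensional non-abelian Lie algebra (spanned by $x,y$ with $[x,y]=x$).
   Context: An abelian complex structure on a real Lie algebra $\mathfrak g$ is a linear map $J$ with $J^2=-\mathrm{Id}$ and $[Jx,Jy]=[x,y]$ for all $x,y\in\mathfrak g$. *)

(* Defs.v *)
From HB Require Import structures.
From mathcomp Require Import all_boot all_order all_algebra.
From mathcomp Require Import reals.
Set Implicit Arguments. Unset Strict Implicit. Unset Printing Implicit Defensive.
Import Order.TTheory GRing.Theory Num.Theory.
Local Open Scope ring_scope.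


Section Lie.
Variables (K : fieldType) (V : vectType K).

Definition is_lie_bracket (br : V -> V -> V) : Prop :=
  [/\ (forall (a : K) (x y z : V), br (a *: x + y) z = a *: br x z + br y z),
      (forall (a : K) (x y z : V), br x (a *: y + z) = a *: br x y + br x z),
      (forall x : V, br x x = 0) &
      (forall x y z : V, br x (br y z) + br y (br z x) + br z (br x y) = 0)].

(* [U,U] : the subspace spanned by all brackets [u,v], u,v in U.  By
   bilinearity it is spanned by the brackets of the basis vectors of U. *)
Definition derived (br : V -> V -> V) (U : {vspace V}) : {vspace V} :=
  (\sum_(i < \dim U) \sum_(j < \dim U)
      <[ br (vbasis U)`_i (vbasis U)`_j ]>)%VS.

Definition derived_series (br : V -> V -> V) (k : nat) : {vspace V} :=
  iter k (derived br) fullv%VS.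

Definition solvable_lie (br : V -> V -> V) : Prop :=
  exists k, derived_series br k = 0%VS.

Definition abelian_complex_structure (br : V -> V -> V) (J : V -> V) : Prop :=
  [/\ linear J, (forall x, J (J x) = - x) & (forall x y, br (J x) (J y) = br x y)].

Definition lie_isomorphic (W : vectType K) (br : V -> V -> V) (brW : W -> W -> W)
  : Prop :=
  exists f : V -> W, [/\ linear f, bijective f &
      forall x y, f (br x y) = brW (f x) (f y)].
End Lie.

(* aff(R): R^2 = span(x,y) with x = e_0, y = e_1 and [x,y] = x, i.e.
   [u,v] = (u_0 v_1 - u_1 v_0) x. *)
Definition aff_br (K : fieldType) (u v : 'rV[K]_2) : 'rV[K]_2 :=
  (u 0 0 * v 0 1 - u 0 1 * v 0 0) *: (delta_mx 0 0 : 'rV[K]_2).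

(* Main.v *)
Require Import Defs.
From HB Require Import structures.
From mathcomp Require Import all_boot all_order all_algebra ssrAC.
From mathcomp Require Import reals.
From mathcomp Require Import lra.
Set Implicit Arguments. Unset Strict Implicit. Unset Printing Implicit Defensive.
Import Order.TTheory GRing.Theory Num.Theory.
Local Open Scope ring_scope.
Section Gen.
Variables (W : zmodType) (c : W -> W -> W).
Hypotheses (cDl : forall x y z, c (x+y) z = c x z + c y z)
 (cDr : forall x y z, c x (y+z) = c x y + c x z)
 (cC : forall x y, c x y = - c y x).

Lemma c0r x : c x 0 = 0.
Proof. by apply: (addrI (c x 0)); rewrite -cDr !addr0. Qed.
Lemma c0l x : c 0 x = 0.
Proof. by apply: (addrI (c 0 x)); rewrite -cDl !addr0. Qed.
Lemma cNr x y : c x (-y) = - c x y.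
Proof. by apply: (addrI (c x y)); rewrite -cDr !subrr c0r. Qed.
Lemma cNl x y : c (-x) y = - c x y.
Proof. by apply: (addrI (c x y)); rewrite -cDl !subrr c0l. Qed.

Lemma jac_leib (jac : forall x y z, c x (c y z) + c y (c z x) + c z (c x y) = 0) x y z :
  c (c x y) z = c x (c y z) - c y (c x z).
Proof.
have := jac x y z; rewrite (cC z (c x y)) (cC z x) cNr => H.
by apply/eqP; rewrite eq_sym -subr_eq0; apply/eqP; rewrite -H.
Qed.

Hypothesis cL : forall x y z, c (c x y) z = c x (c y z) - c y (c x z).

Lemma metab a1 a2 b1 b2 wA wB vA vB :
 c a1 a2 = 0 -> c b1 b2 = 0 -> c a2 b1 = wA + wB -> c a1 b2 = vA + vB ->
 c a1 wA = 0 -> c a2 vA = 0 -> c vA wA = 0 -> c b2 wB = 0 -> c b1 vB = 0 -> c wB vB = 0 ->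
 c (c a1 b1) (c a2 b2) = 0.
Proof.
move=> Ha Hb Hw Hv H1 H2 H3 H4 H5 H6.
have h1 : c b1 (c a2 b2) = c b2 wA.
  have := cL b1 a2 b2; rewrite Hb c0r subr0 => <-.
  by rewrite (cC b1 a2) Hw cNl cDl (cC wB b2) H4 oppr0 addr0 (cC wA b2) opprK.
have h2 : c a1 (c b2 wA) = c vB wA.
  have := cL a1 b2 wA; rewrite H1 c0r subr0 => <-.
  by rewrite Hv cDl H3 add0r.
have h3 : c a1 (c a2 b2) = c a2 vB.
  have := cL a1 a2 b2; rewrite Ha c0l => /eqP; rewrite eq_sym subr_eq0 => /eqP ->.
  by rewrite Hv cDr H2 add0r.
have h4 : c b1 (c a2 vB) = - c wA vB.
  have := cL b1 a2 vB; rewrite H5 c0r subr0 => <-.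
  by rewrite (cC b1 a2) Hw cNl cDl H6 addr0.
by rewrite cL h1 h2 h3 h4 opprK (cC wA vB) subrr.
Qed.
End Gen.
Section Lie.
Variables (R : realType) (V : vectType R) (br : V -> V -> V).
Hypothesis Hbr : is_lie_bracket br.

Definition brl z x := br x z.
Definition brr x z := br x z.
Lemma brl_lin z : linear (brl z).
Proof. by case: Hbr => H _ _ _ a x y; rewrite /brl H. Qed.
Lemma brr_lin x : linear (brr x).
Proof. by case: Hbr => _ H _ _ a y z; rewrite /brr H. Qed.
HB.instance Definition _ z := GRing.isLinear.Build R V V *:%R (brl z) (brl_lin z).
HB.instance Definition _ x := GRing.isLinear.Build R V V *:%R (brr x) (brr_lin x).

Lemma brDl x y z : br (x + y) z = br x z + br y z. Proof. exact: (linearD (brl z)). Qed.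
Lemma brDr x y z : br x (y + z) = br x y + br x z. Proof. exact: (linearD (brr x)). Qed.
Lemma brNl x z : br (- x) z = - br x z. Proof. exact: (linearN (brl z)). Qed.
Lemma brNr x z : br x (- z) = - br x z. Proof. exact: (linearN (brr x)). Qed.
Lemma brZl a x z : br (a *: x) z = a *: br x z. Proof. exact: (linearZ_LR (brl z)). Qed.
Lemma brZr a x z : br x (a *: z) = a *: br x z. Proof. exact: (linearZ_LR (brr x)). Qed.
Lemma br0l z : br 0 z = 0. Proof. exact: (linear0 (brl z)). Qed.
Lemma br0r z : br z 0 = 0. Proof. exact: (linear0 (brr z)). Qed.
Lemma brBl x y z : br (x - y) z = br x z - br y z. Proof. exact: (linearB (brl z)). Qed.
Lemma brBr x y z : br x (y - z) = br x y - br x z. Proof. exact: (linearB (brr x)). Qed.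
Lemma brxx x : br x x = 0. Proof. by case: Hbr. Qed.
Lemma brC x y : br x y = - br y x.
Proof.
have := brxx (x + y); rewrite brDl !brDr !brxx add0r addr0 => /eqP.
by rewrite addr_eq0 => /eqP.
Qed.
Lemma jac x y z : br x (br y z) + br y (br z x) + br z (br x y) = 0.
Proof. by case: Hbr. Qed.
Lemma leib x y z : br (br x y) z = br x (br y z) - br y (br x z).
Proof. exact: (@jac_leib _ br brDr brC jac). Qed.

(* complexification *)
Definition cb (x y : V * V) : V * V :=
  (br x.1 y.1 - br x.2 y.2, br x.1 y.2 + br x.2 y.1).

Lemma cbDl x y z : cb (x + y) z = cb x z + cb y z.
Proof.
case: x y z => [p q] [r s] [u w]; rewrite /cb /= !brDl.
by congr (_, _); rewrite /= ?opprD addrACA.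
Qed.
Lemma cbDr x y z : cb x (y + z) = cb x y + cb x z.
Proof.
case: x y z => [p q] [r s] [u w]; rewrite /cb /= !brDr.
by congr (_, _); rewrite /= ?opprD addrACA.
Qed.
Lemma cbC x y : cb x y = - cb y x.
Proof.
case: x y => [p q] [r s]; rewrite /cb /=.
congr (_, _) => /=; first by rewrite (brC p r) (brC q s) opprK opprB addrC.
by rewrite (brC p s) (brC q r) opprD addrC.
Qed.
Lemma cbjac x y z : cb x (cb y z) + cb y (cb z x) + cb z (cb x y) = 0.
Proof.
case: x y z => [p q] [r s] [u w]; rewrite /cb /=.
congr (_, _); rewrite /= ?brDr ?brBr ?brNr ?opprD ?addrA.
  transitivity ((br p (br r u) + br r (br u p) + br u (br p r))
    - (br p (br s w) + br s (br w p) + br w (br p s))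
    - (br q (br r w) + br r (br w q) + br w (br q r))
    - (br q (br s u) + br s (br u q) + br u (br q s))); last by rewrite !jac !subr0.
  by rewrite !opprD !addrA [LHS](ACl (1*5*9*2*8*11*3*6*12*4*7*10)).
transitivity ((br p (br r w) + br r (br w p) + br w (br p r))
    + (br p (br s u) + br s (br u p) + br u (br p s))
    + (br q (br r u) + br r (br u q) + br u (br q r))
    - (br q (br s w) + br s (br w q) + br w (br q s))); last by rewrite !jac !addr0 subr0.
by rewrite !opprD !addrA [LHS](ACl (1*6*11*2*7*9*3*5*10*4*8*12)).
Qed.

Lemma cbL x y z : cb (cb x y) z = cb x (cb y z) - cb y (cb x z).
Proof. exact: (@jac_leib _ cb cbDr cbC cbjac). Qed.

Lemma mulrn_eq0V (v : V) n : (v *+ n.+1 = 0) -> v = 0.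
Proof.
move=> /eqP; rewrite -scaler_nat scaler_eq0 => /orP [|/eqP //].
by rewrite pnatr_eq0.
Qed.

Lemma brMnl x y n : br (x *+ n) y = br x y *+ n.
Proof. exact: (linearMn (brl y)). Qed.
Lemma brMnr x y n : br x (y *+ n) = br x y *+ n.
Proof. exact: (linearMn (brr x)). Qed.


Lemma brsuml I (r : seq I) (P : pred I) (F : I -> V) z :
  br (\sum_(i <- r | P i) F i) z = \sum_(i <- r | P i) br (F i) z.
Proof. exact: (linear_sum (brl z)). Qed.
Lemma brsumr I (r : seq I) (P : pred I) (F : I -> V) z :
  br z (\sum_(i <- r | P i) F i) = \sum_(i <- r | P i) br z (F i).
Proof. exact: (linear_sum (brr z)). Qed.

Local Notation n := (derived br fullv).

Lemma memv_brn x y : br x y \in n.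
Proof.
rewrite (coord_vbasis (memvf x)) (coord_vbasis (memvf y)) brsuml.
apply: rpred_sum => i _; rewrite brsumr; apply: rpred_sum => j _.
rewrite brZl brZr; apply: rpredZ; apply: rpredZ.
rewrite /derived; apply: (sumv_sup i) => //; apply: (sumv_sup j) => //.
Qed.

Lemma n_kill (f : {linear V -> V}) :
  (forall x y, f (br x y) = 0) -> forall u, u \in n -> f u = 0.
Proof.
move=> Hf u Hu; apply/eqP; rewrite -(lfunE f) -memv_ker.
move: u Hu; apply/subvP; apply/subv_sumP => i _; apply/subv_sumP => j _.
by rewrite -memvE memv_ker lfunE /= Hf.
Qed.

Variable J : V -> V.
Hypothesis HJ : abelian_complex_structure br J.

Lemma Jlin : linear J. Proof. by case: HJ. Qed.
Lemma JJ x : J (J x) = - x. Proof. by case: HJ. Qed.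
Lemma brJJ x y : br (J x) (J y) = br x y. Proof. by case: HJ. Qed.
Lemma JD x y : J (x + y) = J x + J y.
Proof. by have := Jlin 1 x y; rewrite !scale1r. Qed.
Lemma J0 : J 0 = 0.
Proof. by apply: (addrI (J 0)); rewrite -JD !addr0. Qed.
Lemma JZ a x : J (a *: x) = a *: J x.
Proof. by have := Jlin a x 0; rewrite !addr0 J0 addr0. Qed.
Lemma JN x : J (- x) = - J x.
Proof. by rewrite -scaleN1r JZ scaleN1r. Qed.
Lemma brJ1 x y : br (J x) y = - br x (J y).
Proof. by rewrite -(brJJ x (J y)) JJ brNr opprK. Qed.

Definition ca x : V * V := (x, - J x).
Definition cbb y : V * V := (y, J y).

Lemma ca_ab x z : cb (ca x) (ca z) = 0.
Proof.
rewrite /cb /=; congr (_, _) => /=.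
  by rewrite brNl brNr opprK brJJ subrr.
by rewrite brNl brNr brJ1 opprK addNr.
Qed.
Lemma cbb_ab x z : cb (cbb x) (cbb z) = 0.
Proof.
rewrite /cb /=; congr (_, _) => /=.
  by rewrite brJJ subrr.
by rewrite brJ1 addrN.
Qed.

Lemma half2 (v : V) : (2:R)^-1 *: (v + v) = v.
Proof.
rewrite -mulr2n -scaler_nat scalerA mulVf ?scale1r //.
by rewrite pnatr_eq0.
Qed.

Lemma cdecomp (w : V * V) :
  w = ca ((2:R)^-1 *: (w.1 + J w.2)) + cbb ((2:R)^-1 *: (w.1 - J w.2)).
Proof.
case: w => [w1 w2]; rewrite /ca /cbb; congr (_, _) => /=.
  by rewrite -scalerDr addrACA subrr addr0 half2.
rewrite !JZ !JD JN !JJ opprK -scalerN -scalerDr opprD opprK.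
by rewrite addrACA addNr add0r half2.
Qed.

Lemma cmetab x1 y1 x2 y2 :
  cb (cb (ca x1) (cbb y1)) (cb (ca x2) (cbb y2)) = 0.
Proof.
set w := cb (ca x2) (cbb y1); set v := cb (ca x1) (cbb y2).
apply: (@metab _ cb cbDl cbDr cbC cbL _ _ _ _ _ _ _ _ (ca_ab _ _) (cbb_ab _ _)
  (cdecomp w) (cdecomp v)); by rewrite ?ca_ab ?cbb_ab.
Qed.

Lemma cb_ab x y : cb (ca x) (cbb y) = (br x y *+ 2, br x (J y) *+ 2).
Proof.
rewrite /ca /cbb /cb /=; congr (_, _).
  by rewrite brNl opprK brJJ mulr2n.
by rewrite brNl brJ1 opprK mulr2n.
Qed.

Lemma metab_real x1 y1 x2 y2 : br (br x1 y1) (br x2 y2) = 0.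
Proof.
have E1 := cmetab x1 y1 x2 y2; have E2 := cmetab x1 y1 y2 x2.
rewrite !cb_ab /cb /= in E1 E2.
move: E1 E2 => [] E1 _ [] E2 _.
rewrite !brMnl !brMnr -!mulrnA -mulrnBl in E1 E2.
move/mulrn_eq0V: E1 => /eqP; rewrite subr_eq0 => /eqP E1.
rewrite (brC y2 x2) (brC y2 (J x2)) brJ1 opprK brNr in E2.
rewrite -!mulNrn -mulrnDl in E2.
move/mulrn_eq0V: E2; rewrite -E1 -opprD => /eqP; rewrite oppr_eq0 -mulr2n => /eqP.
exact: mulrn_eq0V.
Qed.

Lemma n_ab u v : u \in n -> v \in n -> br u v = 0.
Proof.
move=> Hu Hv; apply: (@n_kill (brr u)) => // x y /=; rewrite /brr.
apply: (@n_kill (brl (br x y))) => // a b /=; rewrite /brl.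
exact: metab_real.
Qed.


Definition Jfun := J.
HB.instance Definition _ := GRing.isLinear.Build R V V *:%R Jfun Jlin.

Hypothesis Hdim : (\dim n).+1 = \dim (fullv : {vspace V}).

Definition a0 := vpick (n^C)%VS.

Lemma dimC : \dim (n^C)%VS = 1%N.
Proof. by rewrite dimv_compl -Hdim subSnn. Qed.
Lemma a_neq0 : a0 != 0.
Proof. by rewrite vpick0 -dimv_eq0 dimC. Qed.
Lemma Cline : (n^C)%VS = <[a0]>%VS.
Proof.
apply/eqP; rewrite eq_sym eqEdim dim_vline a_neq0 dimC leqnn andbT -memvE.
exact: memv_pick.
Qed.
Lemma a_notin : a0 \notin n.
Proof.
apply/negP => Ha; have : a0 \in (n :&: n^C)%VS by rewrite memv_cap Ha memv_pick.
by rewrite capv_compl memv0 (negPf a_neq0).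
Qed.
Lemma decomp v : exists u k, u \in n /\ v = u + k *: a0.
Proof.
have : v \in (n + n^C)%VS by rewrite addv_complf memvf.
case/memv_addP => u Hu [w]; rewrite Cline => /vlineP [k ->] ->.
by exists u, k.
Qed.

Lemma inj_a z : z \in n -> br a0 z = 0 -> z = 0.
Proof.
pose f := linfun (brr a0).
have Himg : (n <= f @: n)%VS.
  apply/subv_sumP => i _; apply/subv_sumP => j _; rewrite -memvE.
  have [u [k [Hu ->]]] := decomp (vbasis fullv)`_i.
  have [u' [k' [Hu' ->]]] := decomp (vbasis fullv)`_j.
  apply/memv_imgP; exists (k *: u' - k' *: u); first by rewrite rpredB // rpredZ.
  rewrite lfunE /= /brr brBr !brZr brDl !brDr !brZl !brZr (n_ab Hu Hu') brxx (brC u a0).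
  by rewrite !scaler0 add0r addr0 scalerN addrC.
have Hd := limg_ker_dim f n.
have H0 : \dim (n :&: lker f) = 0%N.
  apply/eqP; move: (dimvS Himg); rewrite -{1}Hd -{2}[\dim (f @: n)]add0n leq_add2r.
  by rewrite leqn0.
move=> Hz Hbz; have : z \in (n :&: lker f)%VS.
  by rewrite memv_cap Hz memv_ker lfunE /= /brr Hbz eqxx.
by move/eqP: H0; rewrite dimv_eq0 => /eqP ->; rewrite memv0 => /eqP.
Qed.

Lemma Jeig z s : J z = s *: z -> z = 0.
Proof.
move=> Hz; have := JJ z; rewrite Hz JZ Hz scalerA => /eqP.
rewrite -subr_eq0 opprK -{2}(scale1r z) -scalerDl scaler_eq0 => /orP [|/eqP //].
have : 0 < s * s + 1 by nra.
by move=> /lt0r_neq0 /negPf ->.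
Qed.

Lemma mzero z : z \in n -> J z \in n -> z = 0.
Proof.
move=> Hz HJz; have [u0 [t [Hu0 HJa]]] := decomp (J a0).
have H1 : br (J a0) z = t *: br a0 z by rewrite HJa brDl brZl (n_ab Hu0 Hz) add0r.
have H2 : br a0 (J z + t *: z) = 0.
  by rewrite brDr brZr -H1 brJ1 addrN.
apply: (@Jeig z (- t)); apply/eqP; rewrite scaleNr -addr_eq0; apply/eqP.
by apply: inj_a H2; rewrite rpredD // rpredZ.
Qed.

Lemma dn_le1 : (\dim n <= 1)%N.
Proof.
pose Jf := linfun Jfun; pose JN := (Jf @: n)%VS.
have cap0 : (n :&: JN)%VS = 0%VS.
  apply/eqP; rewrite -subv0; apply/subvP => z; rewrite memv_cap.
  case/andP => Hz /memv_imgP [y Hy Hzy]; rewrite Hzy lfunE /= in Hz *.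
  rewrite memv0; apply/eqP; apply: mzero => //.
  by rewrite /Jfun JJ rpredN.
have dimJ : \dim JN = \dim n.
  apply: limg_dim_eq; apply/eqP; rewrite -subv0; apply/subvP => v.
  rewrite memv_cap memv_ker lfunE /= => /andP [_ /eqP Hv].
  by rewrite memv0 -oppr_eq0 -JJ; rewrite /Jfun in Hv; rewrite Hv J0.
have := dimv_sum_cap n JN; rewrite cap0 dimv0 addn0 dimJ => Hs.
have := dimvS (subvf (n + JN)%VS); rewrite Hs -Hdim -addn1 leq_add2l.
done.
Qed.

Lemma dn_eq1 : \dim n = 1%N.
Proof.
have := dn_le1; rewrite leq_eqVlt ltnS leqn0 => /orP [/eqP // | H0].
move: H0; rewrite dimv_eq0 => /eqP H0.
have [u0 [t [Hu0 HJa]]] := decomp (J a0).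
move: Hu0; rewrite H0 memv0 => /eqP Hu0; rewrite Hu0 add0r in HJa.
by have := Jeig HJa; move/eqP; rewrite (negPf a_neq0).
Qed.


Definition x0 := vpick n.
Lemma x0_in : x0 \in n. Proof. exact: memv_pick. Qed.
Lemma x0_neq0 : x0 != 0.
Proof. by rewrite vpick0 -dimv_eq0 dn_eq1. Qed.
Lemma nline : n = <[x0]>%VS.
Proof.
apply/eqP; rewrite eq_sym eqEdim dim_vline x0_neq0 dn_eq1 leqnn andbT -memvE.
exact: x0_in.
Qed.

Lemma exc : exists c, (br x0 a0 == c *: x0) && (c != 0).
Proof.
have := memv_brn x0 a0; rewrite nline => /vlineP [c Hc]; exists c; rewrite Hc eqxx /=.
apply/eqP => c0; rewrite c0 scale0r in Hc.
have : x0 = 0 by apply: inj_a; rewrite ?x0_in // brC Hc oppr0.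
by move/eqP; rewrite (negPf x0_neq0).
Qed.

Definition c0 := xchoose exc.
Definition y0 := c0^-1 *: a0.
Lemma brxy : br x0 y0 = x0.
Proof.
have /andP [/eqP Hc Hc0] := xchooseP exc.
by rewrite /y0 brZr -/c0 Hc scalerA mulVf ?scale1r.
Qed.

Lemma span2 v : exists al be, v = al *: x0 + be *: y0.
Proof.
have /andP [/eqP Hc Hc0] := xchooseP exc.
have [u [k [Hu ->]]] := decomp v.
move: Hu; rewrite nline => /vlineP [al ->]; exists al, (k * c0).
by rewrite /y0 scalerA mulfK.
Qed.

Definition X := [tuple x0; y0].
Lemma basisX : basis_of fullv X.
Proof.
rewrite basisEdim size_tuple -Hdim dn_eq1 leqnn andbT.
apply/subvP => v _; have [al [be ->]] := span2 v.
by rewrite rpredD // rpredZ // memv_span // !inE eqxx ?orbT.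
Qed.
Lemma freeX : free X. Proof. exact: basis_free basisX. Qed.
Lemma coordE v : v = coord X 0 v *: x0 + coord X 1 v *: y0.
Proof.
rewrite {1}(coord_basis basisX (memvf v)) !big_ord_recl big_ord0 addr0 /=.
by congr (coord X _ v *: _ + coord X _ v *: _); apply: val_inj.
Qed.

Lemma brform_gen x y al be ga de : br x y = x ->
  br (al *: x + be *: y) (ga *: x + de *: y) = (al * de - be * ga) *: x.
Proof.
move=> Hxy.
rewrite brDl !brDr !brZl !brZr !brxx (brC y x) Hxy !scaler0 add0r addr0.
rewrite !scalerA scalerN -scaleNr -scalerDl; congr (_ *: _).
Qed.



Definition fiso (v : V) : 'rV[R]_2 := \row_(j < 2) coord X j v.

Lemma fiso_lin : linear fiso.
Proof. by move=> k u v; apply/rowP => j; rewrite !mxE linearP. Qed.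

Lemma fiso_x0 : fiso x0 = delta_mx 0 0.
Proof.
apply/rowP => j; rewrite !mxE (coord_free 0 j freeX) /=.
by case: j => [[|[|//]] Hj].
Qed.

Lemma iso_sec : lie_isomorphic br (@aff_br R).
Proof.
exists fiso; split.
- exact: fiso_lin.
- exists (fun r : 'rV[R]_2 => r 0 0 *: x0 + r 0 1 *: y0).
    by move=> v; rewrite !mxE -coordE.
  move=> r; apply/rowP => j.
  have cy : coord X j y0 = ((1 : 'I_2) == j)%:R := coord_free 1 j freeX.
  rewrite !mxE linearD.
  transitivity (r 0 0 * coord X j x0 + r 0 1 * coord X j y0).
    by congr (_ + _); exact: linearZ.
  rewrite cy (coord_free 0 j freeX).
  clear cy; case: j => [[|[|//]] Hj] /=.
    rewrite mulr1 mulr0 addr0; congr (r _ _); exact: val_inj.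
  rewrite mulr1 mulr0 add0r; congr (r _ _); exact: val_inj.
- move=> u v; rewrite {1}(coordE u) {1}(coordE v) (brform_gen _ _ _ _ brxy).
  have fZ k w : fiso (k *: w) = k *: fiso w.
    by apply/rowP => j; rewrite !mxE linearZ.
  by rewrite fZ fiso_x0 /aff_br !mxE.
Qed.

End Lie.

Theorem mainTheorem13 (R : realType) (V : vectType R) (br : V -> V -> V) :
  is_lie_bracket br ->
  solvable_lie br ->
  (\dim (derived br fullv%VS)).+1 = \dim (fullv : {vspace V}) ->
  (exists J : V -> V, abelian_complex_structure br J) ->
  lie_isomorphic br (@aff_br R).
Proof.
move=> Hbr _ Hdim [J HJ]; exact: (iso_sec Hbr HJ Hdim).
Qed.
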